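(* The variety $\mathcal{WHB}$ of WHB-algebras, and hence each of its subvarieties, has the congruence extension property: whenever $\mathbf A$ is a subalgebra of a WHB-algebra $\mathbf B$ (in the variety in question) and $\delta$ is a congruence of $\mathbf A$, there is a congruence $\theta$ of $\mathbf B$ with $\delta=\theta\cap A^2$.
   Context: A WHB-algebra is an algebra $(A,\wedge,\vee,\to,\leftarrow,0,1)$ such that $(A,\wedge,\vee,0,1)$ is a bounded distributive lattice and for all $a,b,c\in A$: $a\to a=1$; $a\to(b\wedge c)=(a\to b)\wedge(a\to c)$; $(a\vee b)\to c=(a\to c)\wedge(b\to c)$; $(a\to b)\wedge(b\to c)\le a\to c$; $a\leftarrow a=0$; $(a\vee b)\leftarrow c=(a\leftarrow c)\vee(b\leftarrow c)$; $a\leftarrow(b\wedge c)=(a\leftarrow b)\vee(a\leftarrow c)$; $a\leftarrow c\le(a\leftarrow b)\vee(b\leftarrow c)$; $a\wedge((a\to b)\leftarrow 0)\le b$; $a\le b\vee(1\to(a\leftarrow b))$. *)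

(* Defs.v *)
Record WHB_algebra : Type := {
  car :> Type;
  meet : car -> car -> car;
  join : car -> car -> car;
  imp : car -> car -> car;
  coimp : car -> car -> car;
  zero : car;
  one : car;
  meetA : forall a b c, meet a (meet b c) = meet (meet a b) c;
  joinA : forall a b c, join a (join b c) = join (join a b) c;
  meetC : forall a b, meet a b = meet b a;
  joinC : forall a b, join a b = join b a;
  meet_absorb : forall a b, meet a (join a b) = a;
  join_absorb : forall a b, join a (meet a b) = a;
  meet_distr : forall a b c, meet a (join b c) = join (meet a b) (meet a c);
  join0 : forall a, join zero a = a;
  meet1 : forall a, meet one a = a;
  imp_refl : forall a, imp a a = one;
  imp_meet : forall a b c, imp a (meet b c) = meet (imp a b) (imp a c);
  imp_join : forall a b c, imp (join a b) c = meet (imp a c) (imp b c);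
  imp_trans : forall a b c,
      meet (meet (imp a b) (imp b c)) (imp a c) = meet (imp a b) (imp b c);
  coimp_refl : forall a, coimp a a = zero;
  coimp_join : forall a b c, coimp (join a b) c = join (coimp a c) (coimp b c);
  coimp_meet : forall a b c, coimp a (meet b c) = join (coimp a b) (coimp a c);
  coimp_trans : forall a b c,
      meet (coimp a c) (join (coimp a b) (coimp b c)) = coimp a c;
  ax_imp_coimp : forall a b,
      meet (meet a (coimp (imp a b) zero)) b = meet a (coimp (imp a b) zero);
  ax_coimp_imp : forall a b,
      meet a (join b (imp one (coimp a b))) = a
}.

Definition le (B : WHB_algebra) (x y : B) : Prop := meet B x y = x.

Definition is_subalgebra (B : WHB_algebra) (S : B -> Prop) : Prop :=
  S (zero B) /\ S (one B) /\
  (forall x y, S x -> S y ->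
     S (meet B x y) /\ S (join B x y) /\ S (imp B x y) /\ S (coimp B x y)).

Definition is_congruence_on (B : WHB_algebra) (S : B -> Prop)
    (d : B -> B -> Prop) : Prop :=
  (forall x y, d x y -> S x /\ S y) /\
  (forall x, S x -> d x x) /\
  (forall x y, d x y -> d y x) /\
  (forall x y z, d x y -> d y z -> d x z) /\
  (forall x x' y y', d x x' -> d y y' ->
     d (meet B x y) (meet B x' y') /\ d (join B x y) (join B x' y') /\
     d (imp B x y) (imp B x' y') /\ d (coimp B x y) (coimp B x' y')).

Definition is_congruence (B : WHB_algebra) (t : B -> B -> Prop) : Prop :=
  is_congruence_on B (fun _ => True) t.

(* Main.v *)
Require Import Defs.
From Stdlib Require Import Classical.

From mathcomp Require classical_sets.
From Stdlib Require Import FunctionalExtensionality PropExtensionality.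
Local Arguments meet {w} _ _. Arguments join {w} _ _. Arguments imp {w} _ _.
Local Arguments coimp {w} _ _. Arguments zero {w}. Arguments one {w}.
Local Arguments le {B} _ _.

Lemma meet_idem {B : WHB_algebra} (x : B) : meet x x = x.
Proof. rewrite <- (join_absorb B x x) at 2. apply meet_absorb. Qed.

Lemma le_join_iff {B : WHB_algebra} (x y : B) : le x y <-> join x y = y.
Proof.
  unfold le; split; intro H.
  - rewrite <- H, joinC, meetC. apply join_absorb.
  - rewrite <- H. apply meet_absorb.
Qed.

Lemma le_refl {B : WHB_algebra} (x : B) : le x x.
Proof. apply meet_idem. Qed.
Lemma le_trans {B : WHB_algebra} (x y z : B) : le x y -> le y z -> le x z.
Proof. unfold le; intros H1 H2. rewrite <- H1, <- meetA, H2. reflexivity. Qed.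
Lemma le_antisym {B : WHB_algebra} (x y : B) : le x y -> le y x -> x = y.
Proof. unfold le; intros H1 H2. rewrite <- H1, meetC. exact H2. Qed.
Lemma le_meet_l {B : WHB_algebra} (x y : B) : le (meet x y) x.
Proof. unfold le. rewrite (meetC _ x y), <- meetA, meet_idem. reflexivity. Qed.
Lemma le_meet_r {B : WHB_algebra} (x y : B) : le (meet x y) y.
Proof. unfold le. rewrite <- meetA, meet_idem. reflexivity. Qed.
Lemma meet_glb {B : WHB_algebra} (x y z : B) : le z x -> le z y -> le z (meet x y).
Proof. unfold le; intros H1 H2. rewrite meetA, H1, H2. reflexivity. Qed.
Lemma le_join_l {B : WHB_algebra} (x y : B) : le x (join x y).
Proof. apply meet_absorb. Qed.
Lemma le_join_r {B : WHB_algebra} (x y : B) : le y (join x y).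
Proof. rewrite joinC. apply meet_absorb. Qed.
Lemma join_lub {B : WHB_algebra} (x y z : B) : le x z -> le y z -> le (join x y) z.
Proof. rewrite !le_join_iff; intros H1 H2. rewrite <- joinA, H2, H1. reflexivity. Qed.
Lemma le_0 {B : WHB_algebra} (x : B) : le zero x.
Proof. apply le_join_iff, join0. Qed.
Lemma le_1 {B : WHB_algebra} (x : B) : le x one.
Proof. unfold le. rewrite meetC. apply meet1. Qed.
Lemma le_meet_trans_l {B : WHB_algebra} (x y z : B) : le x z -> le (meet x y) z.
Proof. intro H; eapply le_trans; [apply le_meet_l|exact H]. Qed.
Lemma le_meet_trans_r {B : WHB_algebra} (x y z : B) : le y z -> le (meet x y) z.
Proof. intro H; eapply le_trans; [apply le_meet_r|exact H]. Qed.
Lemma le_join_trans_l {B : WHB_algebra} (x y z : B) : le z x -> le z (join x y).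
Proof. intro H; eapply le_trans; [exact H|apply le_join_l]. Qed.
Lemma le_join_trans_r {B : WHB_algebra} (x y z : B) : le z y -> le z (join x y).
Proof. intro H; eapply le_trans; [exact H|apply le_join_r]. Qed.

Ltac lat := first [ apply le_refl | apply le_0 | apply le_1 | assumption
  | apply meet_glb; lat | apply join_lub; lat
  | apply le_meet_trans_l; lat | apply le_meet_trans_r; lat
  | apply le_join_trans_l; lat | apply le_join_trans_r; lat ].
Ltac lat_eq := apply le_antisym; lat.

Lemma imp_mono_r {B : WHB_algebra} (x y y' : B) : le y y' -> le (imp x y) (imp x y').
Proof. unfold le; intro H. rewrite <- imp_meet, H. reflexivity. Qed.
Lemma imp_anti_l {B : WHB_algebra} (x x' y : B) : le x x' -> le (imp x' y) (imp x y).
Proof. rewrite le_join_iff; intro H. rewrite <- H, imp_join. apply le_meet_l. Qed.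
Lemma imp_trans_le {B : WHB_algebra} (x y z : B) : le (meet (imp x y) (imp y z)) (imp x z).
Proof. apply imp_trans. Qed.
Lemma imp_le_one {B : WHB_algebra} (x y : B) : le x y -> imp x y = one.
Proof. intro H. apply le_antisym; [apply le_1|]. rewrite <- (imp_refl B x). apply imp_mono_r, H. Qed.
Lemma coimp_mono_l {B : WHB_algebra} (x x' y : B) : le x x' -> le (coimp x y) (coimp x' y).
Proof. rewrite le_join_iff; intro H. rewrite <- H, coimp_join. apply le_join_l. Qed.
Lemma coimp_anti_r {B : WHB_algebra} (x y y' : B) : le y y' -> le (coimp x y') (coimp x y).
Proof. unfold le; intro H.
  assert (E : coimp x y = join (coimp x y) (coimp x y')) by (rewrite <- coimp_meet, H; reflexivity).
  rewrite E. apply le_join_r. Qed.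
Lemma coimp_trans_le {B : WHB_algebra} (x y z : B) : le (coimp x z) (join (coimp x y) (coimp y z)).
Proof. apply coimp_trans. Qed.
Lemma coimp_le_zero {B : WHB_algebra} (x y : B) : le x y -> coimp x y = zero.
Proof. intro H. apply le_antisym; [|apply le_0]. rewrite <- (coimp_refl B y). apply coimp_mono_l, H. Qed.

Definition filter {B : WHB_algebra} (F : B -> Prop) : Prop :=
  (forall x y, F x -> le x y -> F y) /\ (forall x y, F x -> F y -> F (meet x y)) /\ F one.
Definition prime {B : WHB_algebra} (P : B -> Prop) : Prop :=
  filter P /\ ~ P zero /\ (forall x y, P (join x y) -> P x \/ P y).

Lemma zorn_good {T : Type} (Good : (T -> Prop) -> Prop) (G0 : T -> Prop) :
  Good G0 ->
  (forall C : (T -> Prop) -> Prop, (forall X, C X -> Good X) ->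
     (forall X Y, C X -> C Y -> (forall t, X t -> Y t) \/ (forall t, Y t -> X t)) ->
     forall X0, C X0 -> Good (fun t => exists X, C X /\ X t)) ->
  exists M, (forall t, G0 t -> M t) /\ Good M /\
    (forall N, Good N -> (forall t, M t -> N t) -> forall t, N t -> M t).
Proof.
  intros HG0 Hch.
  destruct (@classical_sets.Zorn_bigcup T (fun X : T -> Prop => Good (fun t => G0 t \/ X t)))
    as [A [HA Hmax]].
  - intros F HF Htot.
    destruct (classic (exists X, F X)) as [[X0 FX0]|Hne].
    + set (C := fun Y => exists X, F X /\ Y = (fun t => G0 t \/ X t)).
      assert (E : (fun t => G0 t \/ classical_sets.bigcup F (fun X => X) t)
                  = (fun t => exists Y, C Y /\ Y t)).
      { apply functional_extensionality; intro t; apply propositional_extensionality.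
        split.
        - intros [h|[X FX h]].
          + exists (fun t => G0 t \/ X0 t); split; [exists X0; auto| left; exact h].
          + exists (fun t => G0 t \/ X t); split; [exists X; auto| right; exact h].
        - intros [Y [[X [FX ->]] [h|h]]]; [left; exact h| right; exists X; auto]. }
      rewrite E. apply (Hch C) with (X0 := fun t => G0 t \/ X0 t).
      * intros Y [X [FX ->]]. apply HF; exact FX.
      * intros Y1 Y2 [X1 [F1 ->]] [X2 [F2 ->]].
        destruct (Htot X1 X2 F1 F2) as [h|h]; [left|right]; intros t [u|u]; auto.
      * exists X0; auto.
    + assert (E : (fun t => G0 t \/ classical_sets.bigcup F (fun X => X) t) = G0).
      { apply functional_extensionality; intro t; apply propositional_extensionality.
        split; [intros [h|[X FX h]]; [exact h| exfalso; apply Hne; exists X; exact FX]| left; auto]. }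
      rewrite E; exact HG0.
  - exists (fun t => G0 t \/ A t). split; [auto|split; [exact HA|]].
    intros N HN Hsub t Nt. apply NNPP; intro Hn.
    apply (Hmax N).
    + split.
      * intros u Au; apply Hsub; right; exact Au.
      * intro h. apply Hn. right; apply h; exact Nt.
    + assert (E : (fun t => G0 t \/ N t) = N).
      { apply functional_extensionality; intro u; apply propositional_extensionality.
        split; [intros [h|h]; [apply Hsub; left|]; auto| right; auto]. }
      rewrite E; exact HN.
Qed.

Lemma imp_witness {B : WHB_algebra} (P : B -> Prop) (x y : B) :
  prime P -> ~ P (imp x y) ->
  exists Q, prime Q /\ (forall c d, P (imp c d) -> Q c -> Q d) /\ Q x /\ ~ Q y.
Proof.
  intros [[Pup [Pmeet P1]] [P0 Pj]] Hxy.
  set (Good := fun Q : B -> Prop => filter Q /\ (forall c d, P (imp c d) -> Q c -> Q d) /\ Q x /\ ~ Q y).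
  destruct (zorn_good Good (fun d => P (imp x d))) as [M [HM0 [[[Mup [Mmeet M1]] [MR [Mx My]]] Mmax]]].
  - split; [split; [|split]|split; [|split]].
    + intros u v Hu Huv. eapply Pup; [exact Hu|]. apply imp_mono_r, Huv.
    + intros u v Hu Hv. rewrite imp_meet. apply Pmeet; assumption.
    + rewrite imp_le_one; [exact P1| apply le_1].
    + intros c d H1 H2. eapply Pup; [apply Pmeet; [exact H2|exact H1]|]. apply imp_trans_le.
    + rewrite imp_refl; exact P1.
    + exact Hxy.
  - intros C HC Hch X0 CX0. split; [split; [|split]|split; [|split]].
    + intros u v [X [CX Xu]] Huv. exists X; split; [exact CX|].
      destruct (HC X CX) as [[Xup _] _]. eapply Xup; eassumption.
    + intros u v [X [CX Xu]] [Y [CY Yv]].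
      destruct (Hch X Y CX CY) as [h|h].
      * exists Y; split; [exact CY|]. destruct (HC Y CY) as [[_ [Ym _]] _]. apply Ym; auto.
      * exists X; split; [exact CX|]. destruct (HC X CX) as [[_ [Xm _]] _]. apply Xm; auto.
    + exists X0; split; [exact CX0|]. destruct (HC X0 CX0) as [[_ [_ X1]] _]. exact X1.
    + intros c d Hcd [X [CX Xc]]. exists X; split; [exact CX|].
      destruct (HC X CX) as [_ [XR _]]. eapply XR; eassumption.
    + exists X0; split; [exact CX0|]. apply (HC X0 CX0).
    + intros [X [CX Xy]]. apply (HC X CX). exact Xy.
  - assert (Mext : forall u, ~ M u -> exists m, M m /\ P (imp (meet m u) y)).
    { intros u Mu.
      set (Mu' := fun d => exists m, M m /\ P (imp (meet m u) d)).
      assert (sub : forall t, M t -> Mu' t).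
      { intros t Mt. exists t; split; [exact Mt|].
        rewrite imp_le_one; [exact P1|apply le_meet_l]. }
      apply NNPP; intro Hn.
      apply Mu. apply (Mmax Mu'); [| exact sub |].
      - split; [split; [|split]|split; [|split]].
        + intros a b [m [Mm Ha]] Hab. exists m; split; [exact Mm|].
          eapply Pup; [exact Ha|]. apply imp_mono_r, Hab.
        + intros a b [m1 [Mm1 Ha]] [m2 [Mm2 Hb]]. exists (meet m1 m2); split; [apply Mmeet; assumption|].
          rewrite imp_meet. apply Pmeet.
          * eapply Pup; [exact Ha|]. apply imp_anti_l. lat.
          * eapply Pup; [exact Hb|]. apply imp_anti_l. lat.
        + apply sub, M1.
        + intros c d Hcd [m [Mm Hc]]. exists m; split; [exact Mm|].
          eapply Pup; [apply Pmeet; [exact Hc|exact Hcd]|]. apply imp_trans_le.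
        + apply sub, Mx.
        + intro H. apply Hn. exact H.
      - exists one; split; [exact M1|]. rewrite imp_le_one; [exact P1|apply le_meet_r]. }
    exists M. split; [split; [split; [|split]| split]|split; [|split]].
    + exact Mup.
    + exact Mmeet.
    + exact M1.
    + intro M0. apply My. eapply Mup; [exact M0|apply le_0].
    + intros u v Huv. apply NNPP; intro Hn.
      apply not_or_and in Hn as [Hu Hv].
      destruct (Mext u Hu) as [m1 [Mm1 H1]]. destruct (Mext v Hv) as [m2 [Mm2 H2]].
      apply My. apply (MR (meet (meet m1 m2) (join u v))).
      * rewrite meet_distr, imp_join. apply Pmeet.
        -- eapply Pup; [exact H1|]. apply imp_anti_l. lat.
        -- eapply Pup; [exact H2|]. apply imp_anti_l. lat.
      * apply Mmeet; [apply Mmeet|]; assumption.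
    + exact MR.
    + exact Mx.
    + exact My.
Qed.

Lemma coimp_witness {B : WHB_algebra} (P : B -> Prop) (x y : B) :
  prime P -> P (coimp x y) ->
  exists Q, prime Q /\ (forall c d, Q c -> ~ P (coimp c d) -> Q d) /\ Q x /\ ~ Q y.
Proof.
  intros [[Pup [Pmeet P1]] [P0 Pj]] Hxy.
  assert (nPj : forall a b, ~ P a -> ~ P b -> ~ P (join a b)).
  { intros a b Ha Hb H. destruct (Pj a b H); auto. }
  assert (nPle : forall a b, le a b -> ~ P b -> ~ P a).
  { intros a b Hab Hb Ha. apply Hb. eapply Pup; eassumption. }
  set (Good := fun Q : B -> Prop => filter Q /\ (forall c d, Q c -> ~ P (coimp c d) -> Q d) /\ Q x /\ ~ Q y).
  destruct (zorn_good Good (fun d => ~ P (coimp x d))) as [M [HM0 [[[Mup [Mmeet M1]] [MR [Mx My]]] Mmax]]].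
  - split; [split; [|split]|split; [|split]].
    + intros u v Hu Huv. eapply nPle; [|exact Hu]. apply coimp_anti_r, Huv.
    + intros u v Hu Hv. rewrite coimp_meet. apply nPj; assumption.
    + rewrite coimp_le_zero; [exact P0| apply le_1].
    + intros c d H1 H2. eapply nPle; [apply coimp_trans_le|]. apply nPj; [exact H1|exact H2].
    + rewrite coimp_refl; exact P0.
    + intro H; apply H; exact Hxy.
  - intros C HC Hch X0 CX0. split; [split; [|split]|split; [|split]].
    + intros u v [X [CX Xu]] Huv. exists X; split; [exact CX|].
      destruct (HC X CX) as [[Xup _] _]. eapply Xup; eassumption.
    + intros u v [X [CX Xu]] [Y [CY Yv]].
      destruct (Hch X Y CX CY) as [h|h].
      * exists Y; split; [exact CY|]. destruct (HC Y CY) as [[_ [Ym _]] _]. apply Ym; auto.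
      * exists X; split; [exact CX|]. destruct (HC X CX) as [[_ [Xm _]] _]. apply Xm; auto.
    + exists X0; split; [exact CX0|]. destruct (HC X0 CX0) as [[_ [_ X1]] _]. exact X1.
    + intros c d [X [CX Xc]] Hcd. exists X; split; [exact CX|].
      destruct (HC X CX) as [_ [XR _]]. eapply XR; eassumption.
    + exists X0; split; [exact CX0|]. apply (HC X0 CX0).
    + intros [X [CX Xy]]. apply (HC X CX). exact Xy.
  - assert (Mext : forall u, ~ M u -> exists m, M m /\ ~ P (coimp (meet m u) y)).
    { intros u Mu.
      set (Mu' := fun d => exists m, M m /\ ~ P (coimp (meet m u) d)).
      assert (sub : forall t, M t -> Mu' t).
      { intros t Mt. exists t; split; [exact Mt|].
        rewrite coimp_le_zero; [exact P0|apply le_meet_l]. }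
      apply NNPP; intro Hn.
      apply Mu. apply (Mmax Mu'); [| exact sub |].
      - split; [split; [|split]|split; [|split]].
        + intros a b [m [Mm Ha]] Hab. exists m; split; [exact Mm|].
          eapply nPle; [|exact Ha]. apply coimp_anti_r, Hab.
        + intros a b [m1 [Mm1 Ha]] [m2 [Mm2 Hb]]. exists (meet m1 m2); split; [apply Mmeet; assumption|].
          rewrite coimp_meet. apply nPj.
          * eapply nPle; [|exact Ha]. apply coimp_mono_l. lat.
          * eapply nPle; [|exact Hb]. apply coimp_mono_l. lat.
        + apply sub, M1.
        + intros c d [m [Mm Hc]] Hcd. exists m; split; [exact Mm|].
          apply (nPle _ _ (coimp_trans_le _ c _)). apply nPj; assumption.
        + apply sub, Mx.
        + intro H. apply Hn. exact H.
      - exists one; split; [exact M1|]. rewrite coimp_le_zero; [exact P0|apply le_meet_r]. }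
    exists M. split; [split; [split; [|split]| split]|split; [|split]].
    + exact Mup.
    + exact Mmeet.
    + exact M1.
    + intro M0. apply My. eapply Mup; [exact M0|apply le_0].
    + intros u v Huv. apply NNPP; intro Hn.
      apply not_or_and in Hn as [Hu Hv].
      destruct (Mext u Hu) as [m1 [Mm1 H1]]. destruct (Mext v Hv) as [m2 [Mm2 H2]].
      apply My. apply (MR (meet (meet m1 m2) (join u v))).
      * apply Mmeet; [apply Mmeet|]; assumption.
      * rewrite meet_distr, coimp_join. apply nPj.
        -- eapply nPle; [|exact H1]. apply coimp_mono_l. lat.
        -- eapply nPle; [|exact H2]. apply coimp_mono_l. lat.
    + exact MR.
    + exact Mx.
    + exact My.
Qed.

Lemma ext_prime {B : WHB_algebra} (S Q : B -> Prop) :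
  is_subalgebra B S -> (forall z, Q z -> S z) ->
  (forall u v, Q u -> S v -> le u v -> Q v) ->
  (forall u v, Q u -> Q v -> Q (meet u v)) -> Q one -> ~ Q zero ->
  (forall u v, S u -> S v -> Q (join u v) -> Q u \/ Q v) ->
  exists P, prime P /\ forall s, S s -> (P s <-> Q s).
Proof.
  intros [S0 [S1 Sop]] QS Qup Qmeet Q1 Q0 Qj.
  set (Good := fun P : B -> Prop => filter P /\ (forall s, Q s -> P s) /\ (forall s, S s -> P s -> Q s)).
  destruct (zorn_good Good (fun z => exists q, Q q /\ le q z)) as [M [HM0 [[[Mup [Mmeet M1]] [MQ MS]] Mmax]]].
  - split; [split; [|split]|split].
    + intros u v [q [Qq Hq]] Huv. exists q; split; [exact Qq|]. eapply le_trans; eassumption.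
    + intros u v [q1 [Q1' H1]] [q2 [Q2 H2]]. exists (meet q1 q2); split; [apply Qmeet; assumption|].
      lat.
    + exists one; split; [exact Q1|apply le_refl].
    + intros s Qs. exists s; split; [exact Qs|apply le_refl].
    + intros s Ss [q [Qq Hq]]. eapply Qup; eassumption.
  - intros C HC Hch X0 CX0. split; [split; [|split]|split].
    + intros u v [X [CX Xu]] Huv. exists X; split; [exact CX|].
      destruct (HC X CX) as [[Xup _] _]. eapply Xup; eassumption.
    + intros u v [X [CX Xu]] [Y [CY Yv]].
      destruct (Hch X Y CX CY) as [h|h].
      * exists Y; split; [exact CY|]. destruct (HC Y CY) as [[_ [Ym _]] _]. apply Ym; auto.
      * exists X; split; [exact CX|]. destruct (HC X CX) as [[_ [Xm _]] _]. apply Xm; auto.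
    + exists X0; split; [exact CX0|]. destruct (HC X0 CX0) as [[_ [_ X1]] _]. exact X1.
    + intros s Qs. exists X0; split; [exact CX0|]. apply (HC X0 CX0), Qs.
    + intros s Ss [X [CX Xs]]. apply (HC X CX); assumption.
  - assert (Mext : forall u, ~ M u -> exists p s, M p /\ S s /\ ~ Q s /\ le (meet p u) s).
    { intros u Mu.
      set (Mu' := fun z => exists p, M p /\ le (meet p u) z).
      assert (sub : forall t, M t -> Mu' t).
      { intros t Mt. exists t; split; [exact Mt|]. lat. }
      apply NNPP; intro Hn.
      apply Mu. apply (Mmax Mu'); [| exact sub |].
      - split; [split; [|split]|split].
        + intros a b [m [Mm Ha]] Hab. exists m; split; [exact Mm|]. eapply le_trans; eassumption.
        + intros a b [m1 [Mm1 Ha]] [m2 [Mm2 Hb]]. exists (meet m1 m2); split; [apply Mmeet; assumption|].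
          apply meet_glb; [eapply le_trans; [|exact Ha]|eapply le_trans; [|exact Hb]]; lat.
        + apply sub, M1.
        + intros s Qs. apply sub, MQ, Qs.
        + intros s Ss Hs. apply NNPP; intro nQ. apply Hn.
          destruct Hs as [p [Mp Hp]]. exists p, s; auto.
      - exists one; split; [exact M1|]. lat. }
    exists M. split; [split; [split; [|split]|split]|].
    + exact Mup.
    + exact Mmeet.
    + exact M1.
    + intro M0. apply Q0, MS; [exact S0|exact M0].
    + intros u v Huv. apply NNPP; intro Hn.
      apply not_or_and in Hn as [Hu Hv].
      destruct (Mext u Hu) as [p1 [s1 [Mp1 [Ss1 [Qs1 H1]]]]].
      destruct (Mext v Hv) as [p2 [s2 [Mp2 [Ss2 [Qs2 H2]]]]].
      assert (Sj : S (join s1 s2)) by (apply Sop; assumption).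
      destruct (Qj s1 s2 Ss1 Ss2) as [h|h]; [| apply Qs1, h| apply Qs2, h].
      apply MS; [exact Sj|].
      apply (Mup (meet (meet p1 p2) (join u v))); [apply Mmeet; [apply Mmeet|]; assumption|].
      rewrite meet_distr. apply join_lub.
      * apply le_join_trans_l. eapply le_trans; [|exact H1]. lat.
      * apply le_join_trans_r. eapply le_trans; [|exact H2]. lat.
    + intros s Ss; split; [apply MS, Ss| apply MQ].
Qed.

Lemma sat_prime {B : WHB_algebra} (S : B -> Prop) (d : B -> B -> Prop) (a c : B) :
  is_subalgebra B S -> is_congruence_on B S d -> S a -> S c -> le c a -> ~ d c a ->
  exists Q, (forall z, Q z -> S z) /\ (forall u v, Q u -> S v -> le u v -> Q v) /\
    (forall u v, Q u -> Q v -> Q (meet u v)) /\ (forall u v, d u v -> Q u -> Q v) /\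
    (forall u v, S u -> S v -> Q (join u v) -> Q u \/ Q v) /\ Q a /\ ~ Q c.
Proof.
  intros [S0 [S1 Sop]] [dS [drefl [dsym [dtrans dop]]]] Sa Sc Hca Hdca.
  assert (Sm : forall x y, S x -> S y -> S (meet x y)) by (intros x y Hx Hy; apply (Sop x y Hx Hy)).
  assert (Sj : forall x y, S x -> S y -> S (join x y)) by (intros x y Hx Hy; apply (Sop x y Hx Hy)).
  assert (dm : forall x x' y y', d x x' -> d y y' -> d (meet x y) (meet x' y')) by
    (intros; apply (dop _ _ _ _ H H0)).
  assert (dj : forall x x' y y', d x x' -> d y y' -> d (join x y) (join x' y')) by
    (intros; apply (dop _ _ _ _ H H0)).
  assert (dcg : forall x y x' y', d x y -> x = x' -> y = y' -> d x' y') by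
    (intros; subst; assumption).
  assert (deq : forall x y, S x -> x = y -> d x y) by (intros; subst; apply drefl; assumption).
  Ltac sS Sm Sj := repeat (first [apply Sm | apply Sj]); auto.
  set (Good := fun G : B -> Prop => (forall z, G z -> S z) /\
     (forall u v, G u -> S v -> d (meet u v) u -> G v) /\
     (forall u v, G u -> G v -> G (meet u v)) /\ G a /\ ~ G c).
  destruct (zorn_good Good (fun v => S v /\ d (meet a v) a)) as [M [HM0 [[MS [Mup [Mmeet [Ma Mc]]]] Mmax]]].
  - split; [|split; [|split; [|split]]].
    + intros z [Sz _]; exact Sz.
    + intros u v [Su Hu] Sv Huv. split; [exact Sv|].
      assert (e1 := dm _ _ _ _ Hu (drefl (meet a v) (Sm _ _ Sa Sv))).
      assert (e2 := dm _ _ _ _ (drefl a Sa) Huv).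
      apply (dtrans _ (meet a (meet u v))).
      * apply dsym. eapply dcg; [exact e1| lat_eq | lat_eq].
      * eapply dtrans; [exact e2| exact Hu].
    + intros u v [Su Hu] [Sv Hv]. split; [apply Sm; assumption|].
      eapply dcg; [exact (dm _ _ _ _ Hu Hv)| lat_eq | apply meet_idem].
    + split; [exact Sa| apply deq; [apply Sm; assumption| apply meet_idem]].
    + intros [_ H]. apply Hdca. eapply dcg; [exact H| |reflexivity].
      rewrite meetC. exact Hca.
  - intros C HC Hch X0 CX0. split; [|split; [|split; [|split]]].
    + intros z [X [CX Xz]]. apply (HC X CX), Xz.
    + intros u v [X [CX Xu]] Sv Huv. exists X; split; [exact CX|].
      destruct (HC X CX) as [_ [Xup _]]. eapply Xup; eassumption.
    + intros u v [X [CX Xu]] [Y [CY Yv]].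
      destruct (Hch X Y CX CY) as [h|h].
      * exists Y; split; [exact CY|]. destruct (HC Y CY) as [_ [_ [Ym _]]]. apply Ym; auto.
      * exists X; split; [exact CX|]. destruct (HC X CX) as [_ [_ [Xm _]]]. apply Xm; auto.
    + exists X0; split; [exact CX0|]. apply (HC X0 CX0).
    + intros [X [CX Xc]]. apply (HC X CX). exact Xc.
  - assert (Mext : forall u, S u -> ~ M u -> exists g, M g /\ d (meet (meet g u) c) (meet g u)).
    { intros u Su Mu.
      set (Mu' := fun w => S w /\ exists g, M g /\ d (meet (meet g u) w) (meet g u)).
      assert (sub : forall t, M t -> Mu' t).
      { intros t Mt. assert (St := MS t Mt). split; [exact St|]. exists t; split; [exact Mt|].
        apply deq; [sS Sm Sj| lat_eq]. }
      apply NNPP; intro Hn.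
      apply Mu. apply (Mmax Mu'); [| exact sub |].
      - split; [|split; [|split; [|split]]].
        + intros z [Sz _]; exact Sz.
        + intros w w' [Sw [g [Mg X]]] Sw' Y. split; [exact Sw'|]. exists g; split; [exact Mg|].
          assert (Sg := MS g Mg).
          set (h := meet g u) in *.
          assert (Sh : S h) by (unfold h; sS Sm Sj).
          assert (f1 := dm _ _ _ _ X (drefl (meet h w') (Sm _ _ Sh Sw'))).
          assert (f2 := dm _ _ _ _ (drefl h Sh) Y).
          apply (dtrans _ (meet h (meet w w'))).
          * apply dsym. eapply dcg; [exact f1| lat_eq | lat_eq].
          * eapply dtrans; [|exact X]. eapply dcg; [exact f2|lat_eq|reflexivity].
        + intros w1 w2 [Sw1 [g1 [Mg1 X1]]] [Sw2 [g2 [Mg2 X2]]]. split; [apply Sm; assumption|].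
          exists (meet g1 g2); split; [apply Mmeet; assumption|].
          assert (Sg1 := MS g1 Mg1). assert (Sg2 := MS g2 Mg2).
          set (h := meet (meet g1 g2) u).
          assert (Sh : S h) by (unfold h; sS Sm Sj).
          assert (k1 := dm _ _ _ _ (drefl h Sh) X1).
          assert (k2 := dm _ _ _ _ (drefl h Sh) X2).
          assert (k1' : d (meet h w1) h) by (eapply dcg; [exact k1| unfold h; lat_eq| unfold h; lat_eq]).
          assert (k2' : d (meet h w2) h) by (eapply dcg; [exact k2| unfold h; lat_eq| unfold h; lat_eq]).
          eapply dcg; [exact (dm _ _ _ _ k1' k2')| lat_eq| apply meet_idem].
        + apply sub, Ma.
        + intros [_ H]. apply Hn. exact H.
      - split; [exact Su|]. exists a; split; [exact Ma|]. apply deq; [sS Sm Sj| lat_eq]. }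
    exists M. split; [exact MS|split; [|split; [exact Mmeet|split; [|split; [|split; [exact Ma|exact Mc]]]]]].
    + intros u v Mu Sv Huv. apply (Mup u v Mu Sv). apply deq; [sS Sm Sj; apply MS, Mu| exact Huv].
    + intros u v Huv Mu. destruct (dS u v Huv) as [Su Sv]. apply (Mup u v Mu Sv).
      eapply dcg; [exact (dm _ _ _ _ (drefl u Su) (dsym _ _ Huv))| reflexivity| apply meet_idem].
    + intros u v Su Sv Muv. apply NNPP; intro Hn.
      apply not_or_and in Hn as [Hu Hv].
      destruct (Mext u Su Hu) as [g1 [Mg1 X1]]. destruct (Mext v Sv Hv) as [g2 [Mg2 X2]].
      assert (Sg1 := MS g1 Mg1). assert (Sg2 := MS g2 Mg2).
      set (h1 := meet (meet g1 g2) u). set (h2 := meet (meet g1 g2) v).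
      assert (Sh1 : S h1) by (unfold h1; sS Sm Sj).
      assert (Sh2 : S h2) by (unfold h2; sS Sm Sj).
      assert (k1 : d (meet h1 c) h1) by
        (eapply dcg; [exact (dm _ _ _ _ (drefl h1 Sh1) X1)| unfold h1; lat_eq| unfold h1; lat_eq]).
      assert (k2 : d (meet h2 c) h2) by
        (eapply dcg; [exact (dm _ _ _ _ (drefl h2 Sh2) X2)| unfold h2; lat_eq| unfold h2; lat_eq]).
      apply Mc. apply (Mup (join h1 h2) c).
      * unfold h1, h2. rewrite <- meet_distr. apply Mmeet; [apply Mmeet|]; assumption.
      * exact Sc.
      * eapply dcg; [exact (dj _ _ _ _ k1 k2)| |reflexivity].
        rewrite (meetC _ (join h1 h2)), meet_distr, !(meetC _ c). reflexivity.
Qed.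

Lemma prime_meet_iff {B : WHB_algebra} (P : B -> Prop) x y : prime P -> (P (meet x y) <-> P x /\ P y).
Proof.
  intros [[Pup [Pm _]] _]; split.
  - intro H; split; eapply Pup; [exact H| lat| exact H| lat].
  - intros [H1 H2]; apply Pm; assumption.
Qed.
Lemma prime_join_iff {B : WHB_algebra} (P : B -> Prop) x y : prime P -> (P (join x y) <-> P x \/ P y).
Proof.
  intros [[Pup _] [_ Pj]]; split.
  - apply Pj.
  - intros [H|H]; eapply Pup; [exact H| lat| exact H| lat].
Qed.

Theorem corollary6p28 :
  forall (B : WHB_algebra) (S : B -> Prop) (d : B -> B -> Prop),
    is_subalgebra B S ->
    is_congruence_on B S d ->
    exists t : B -> B -> Prop,
      is_congruence B t /\
      (forall x y, d x y <-> (S x /\ S y /\ t x y)).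
Proof.
  intros B S d HS Hd.
  pose proof HS as [S0 [S1 Sop]].
  pose proof Hd as [dS [drefl [dsym [dtrans dop]]]].
  set (sat := fun P : B -> Prop => forall u v, d u v -> P u -> P v).
  set (T := fun x y : B => forall P, prime P -> sat P -> (P x <-> P y)).
  assert (succ_imp : forall P Q, prime P -> sat P -> (forall c e, P (imp c e) -> Q c -> Q e) -> sat Q).
  { intros P Q HP Hs HR u v Huv Qu. apply (HR u v); [|exact Qu].
    destruct (dS _ _ Huv) as [Su Sv].
    assert (h : d (imp u v) (imp v v)) by apply (dop _ _ _ _ Huv (drefl v Sv)).
    rewrite imp_refl in h. apply (Hs one); [apply dsym, h| apply HP]. }
  assert (succ_coimp : forall P Q, prime P -> sat P -> (forall c e, Q c -> ~ P (coimp c e) -> Q e) -> sat Q).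
  { intros P Q HP Hs HR u v Huv Qu. apply (HR u v Qu). intro Hp.
    destruct (dS _ _ Huv) as [Su Sv].
    assert (h : d (coimp u v) (coimp v v)) by apply (dop _ _ _ _ Huv (drefl v Sv)).
    rewrite coimp_refl in h. destruct HP as [_ [P0 _]]. apply P0. apply (Hs _ _ h Hp). }
  assert (imp_dir : forall x x' y y', (forall Q, prime Q -> sat Q -> (Q x' -> Q x)) ->
     (forall Q, prime Q -> sat Q -> (Q y -> Q y')) ->
     forall P, prime P -> sat P -> P (imp x y) -> P (imp x' y')).
  { intros x x' y y' Hx Hy P HP Hs H. apply NNPP; intro Hn.
    destruct (imp_witness P x' y' HP Hn) as [Q [HQ [HR [Qx' Qy']]]].
    assert (sQ := succ_imp P Q HP Hs HR).
    apply Qy', (Hy Q HQ sQ), (HR x y H), (Hx Q HQ sQ), Qx'. }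
  assert (coimp_dir : forall x x' y y', (forall Q, prime Q -> sat Q -> (Q x -> Q x')) ->
     (forall Q, prime Q -> sat Q -> (Q y' -> Q y)) ->
     forall P, prime P -> sat P -> P (coimp x y) -> P (coimp x' y')).
  { intros x x' y y' Hx Hy P HP Hs H. apply NNPP; intro Hn.
    destruct (coimp_witness P x y HP H) as [Q [HQ [HR [Qx Qy]]]].
    assert (sQ := succ_coimp P Q HP Hs HR).
    apply Qy, (Hy Q HQ sQ), (HR x' y' ((Hx Q HQ sQ) Qx) Hn). }
  assert (key : forall a c, S a -> S c -> le c a -> ~ d c a ->
     exists P, prime P /\ sat P /\ P a /\ ~ P c).
  { intros a c Sa Sc Hca Hn.
    destruct (sat_prime S d a c HS Hd Sa Sc Hca Hn) as [Q [QS [Qup [Qm [Qd [Qj [Qa Qc]]]]]]].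
    destruct (ext_prime S Q HS QS Qup Qm) as [P [HP HPQ]].
    - apply (Qup a); [exact Qa| exact S1| apply le_1].
    - intro Q0. apply Qc, (Qup zero); [exact Q0| exact Sc| apply le_0].
    - exact Qj.
    - exists P; split; [exact HP|split; [|split]].
      + intros u v Huv Pu. destruct (dS _ _ Huv) as [Su Sv].
        apply HPQ; [exact Sv|]. apply (Qd u v Huv). apply HPQ; assumption.
      + apply HPQ; assumption.
      + intro Pc. apply Qc. apply HPQ; assumption. }
  exists T. split.
  - split; [intros; split; exact I|split; [|split; [|split]]].
    + intros x _ P _ _; split; auto.
    + intros x y H P HP Hs. symmetry. apply H; assumption.
    + intros x y z H1 H2 P HP Hs. rewrite (H1 P HP Hs). apply H2; assumption.
    + intros x x' y y' Hx Hy. split; [|split; [|split]]; intros P HP Hs.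
      * rewrite !prime_meet_iff by exact HP. rewrite (Hx P HP Hs), (Hy P HP Hs). tauto.
      * rewrite !prime_join_iff by exact HP. rewrite (Hx P HP Hs), (Hy P HP Hs). tauto.
      * split; apply imp_dir; auto; intros Q HQ sQ; apply (Hx Q HQ sQ) || apply (Hy Q HQ sQ).
      * split; apply coimp_dir; auto; intros Q HQ sQ; apply (Hx Q HQ sQ) || apply (Hy Q HQ sQ).
  - intros x y; split.
    + intro Hxy. destruct (dS _ _ Hxy) as [Sx Sy]. split; [exact Sx|split; [exact Sy|]].
      intros P HP Hs; split; apply Hs; [exact Hxy| apply dsym; exact Hxy].
    + intros [Sx [Sy Hxy]]. apply NNPP; intro Hn.
      assert (Sxy : S (meet x y)) by apply (Sop x y Sx Sy).
      destruct (classic (d x (meet x y))) as [h1|h1].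
      * destruct (classic (d y (meet x y))) as [h2|h2].
        -- apply Hn. eapply dtrans; [exact h1| apply dsym; exact h2].
        -- destruct (key y (meet x y) Sy Sxy (le_meet_r x y)) as [P [HP [Hs [Py Pc]]]].
           { intro h; apply h2, dsym, h. }
           apply Pc, prime_meet_iff; [exact HP|]. split; [|exact Py].
           apply (Hxy P HP Hs), Py.
      * destruct (key x (meet x y) Sx Sxy (le_meet_l x y)) as [P [HP [Hs [Px Pc]]]].
        { intro h; apply h1, dsym, h. }
        apply Pc, prime_meet_iff; [exact HP|]. split; [exact Px|].
        apply (Hxy P HP Hs), Px.
Qed.
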